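(* Assume conditions A, D' and E' hold for the semi-Markov processes $\eta^{(\varepsilon)}(t)$, $\varepsilon\in(0,\varepsilon_0]$, together with the paper's standing regularity conditions on the semi-Markov kernels, and let $\delta^*=\min_{i\in\mathbb{X},\,j\in\mathbb{Y}_i}(\delta_{ij}\wedge\dot\delta_{ij})$. Then for every $i\in\mathbb{X}$ the stationary probability $\pi_i(\varepsilon)$ admits a pivotal Taylor expansion with a power-type remainder bound of exponent $\delta^*$: there exist integers $0\le n^-_i\le n^+_i$, reals $c_i[l]$, $n^-_i\le l\le n^+_i$, with $c_i[n^-_i]\ne0$, and constants $G^*_i\in(0,\infty)$, $\varepsilon_i\in(0,\varepsilon_0]$ such that $\big|\pi_i(\varepsilon)-\sum_{l=n^-_i}^{n^+_i}c_i[l]\varepsilon^l\big|\le G^*_i\varepsilon^{n^+_i+\delta^*}$ for $0<\varepsilon\le\varepsilon_i$.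
   Context: Let $\mathbb{X}=\{1,\dots,N\}$, $0<\varepsilon_0\le1$. For each $\varepsilon\in(0,\varepsilon_0]$, $\eta^{(\varepsilon)}(t)$ is a semi-Markov process on $\mathbb{X}$ with jump times $0=\tau_0<\tau_1<\cdots$, embedded Markov chain $\eta_n=\eta^{(\varepsilon)}(\tau_n)$, sojourn times $\kappa_{n+1}=\tau_{n+1}-\tau_n$ and semi-Markov transition probabilities $Q^{(\varepsilon)}_{ij}(t)=P(\eta_{n+1}=j,\kappa_{n+1}\le t\mid\eta_n=i)$; $p_{ij}(\varepsilon)=Q^{(\varepsilon)}_{ij}(\infty)$ and $e_{ij}(\varepsilon)=\int_0^\infty t\,Q^{(\varepsilon)}_{ij}(dt)$ (finite). The paper also assumes standing regularity conditions on $Q^{(\varepsilon)}_{ij}$ guaranteeing a well-defined process with finite $e_{ij}$. Let $e_i(\varepsilon)=\sum_{j\in\mathbb{X}}e_{ij}(\varepsilon)$ (expected sojourn time in $i$), $E_{ii}(\varepsilon)$ the expectation of $\tau_{\nu_i}$, $\nu_i=\min\{n\ge1:\eta_n=i\}$, for the process started at $\eta_0=i$, and $\pi_i(\varepsilon)=e_i(\varepsilon)/E_{ii}(\varepsilon)$, the stationary (long-run time-average) probability of state $i$. Condition A: there are nonempty $\mathbb{Y}_i\subseteq\mathbb{X}$ with (a) $p_{ij}(\varepsilon)>0$ for $j\in\mathbb{Y}_i$; (b) $p_{ij}(\varepsilon)=0$ for $j\notin\mathbb{Y}_i$; (c) for all $i,j$ there are $n\ge1$ and $i=l_0,\dots,l_n=j$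 with $l_m\in\mathbb{Y}_{l_{m-1}}$. Condition D': for $j\in\mathbb{Y}_i$, $p_{ij}(\varepsilon)=\sum_{l=l^-_{ij}}^{l^+_{ij}}a_{ij}[l]\varepsilon^l+o_{ij}(\varepsilon)$ with integers $0\le l^-_{ij}\le l^+_{ij}$, $a_{ij}[l^-_{ij}]>0$, $|o_{ij}(\varepsilon)|\le G_{ij}\varepsilon^{l^+_{ij}+\delta_{ij}}$ for $0<\varepsilon\le\varepsilon_{ij}$, $\delta_{ij}\in(0,1]$, $G_{ij}\in(0,\infty)$, $\varepsilon_{ij}\in(0,\varepsilon_0]$. Condition E': for $j\in\mathbb{Y}_i$, $e_{ij}(\varepsilon)=\sum_{l=m^-_{ij}}^{m^+_{ij}}b_{ij}[l]\varepsilon^l+\dot o_{ij}(\varepsilon)$ with integers $m^-_{ij}\le m^+_{ij}$, $b_{ij}[m^-_{ij}]>0$, $|\dot o_{ij}(\varepsilon)|\le\dot G_{ij}\varepsilon^{m^+_{ij}+\dot\delta_{ij}}$ for $0<\varepsilon\le\dot\varepsilon_{ij}$, $\dot\delta_{ij}\in(0,1]$, $\dot G_{ij}\in(0,\infty)$, $\dot\varepsilon_{ij}\in(0,\varepsilon_0]$. *)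

(* Defs.v *)
From HB Require Import structures.
From mathcomp Require Import all_boot all_order all_algebra.
From mathcomp Require Import all_classical all_reals all_analysis.
Set Implicit Arguments. Unset Strict Implicit. Unset Printing Implicit Defensive.
Import Order.TTheory GRing.Theory Num.Theory.
Import numFieldNormedType.Exports.
Local Open Scope ring_scope.

(* States X = {1,...,N} are represented by 'I_N.
   For a fixed epsilon, P : 'I_N -> 'I_N -> R are the transition probabilities
   p_ij of the embedded Markov chain and Em : 'I_N -> 'I_N -> R the quantities
   e_ij = \int_0^oo t Q_ij(dt). *)

Definition esoj (N : nat) (R : realType) (Em : 'I_N -> 'I_N -> R) (i : 'I_N) : R :=
  \sum_(j < N) Em i j.

(* taboo (P i n k) = P_i( eta_n = k, eta_1 <> i, ..., eta_n <> i ),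
   for the embedded chain started at eta_0 = i
   (for n = 0 this is the indicator of k = i). *)
Fixpoint taboo (N : nat) (R : realType) (P : 'I_N -> 'I_N -> R) (i : 'I_N)
  (n : nat) (k : 'I_N) : R :=
  match n with
  | 0 => (k == i)%:R
  | n'.+1 => (k != i)%:R * \sum_(m < N) taboo P i n' m * P m k
  end.

(* E_ii = E_i tau_{nu_i} = \sum_{n >= 0} E_i [kappa_{n+1} ; nu_i >= n+1]
        = \sum_{n >= 0} \sum_k P_i(eta_n = k, nu_i > n) e_k ,
   using the Markov renewal property (conditionally on eta_n = k, the
   sojourn kappa_{n+1} has E = \sum_j e_kj = e_k). *)
Definition ret_time (N : nat) (R : realType) (P Em : 'I_N -> 'I_N -> R)
  (i : 'I_N) : R :=
  limn (series ((fun n => \sum_(k < N) taboo P i n k * esoj Em k) : R ^nat)).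

Definition stat_prob (N : nat) (R : realType) (P Em : 'I_N -> 'I_N -> R)
  (i : 'I_N) : R :=
  esoj Em i / ret_time P Em i.

(* delta^* = min over i in X, j in Y_i of (delta_ij /\ dot delta_ij);
   all delta's lie in (0,1], so 1 is a neutral start. *)
Definition delta_star (N : nat) (R : realType) (Y : 'I_N -> {set 'I_N})
  (d dd : 'I_N -> 'I_N -> R) : R :=
  \big[Num.min/1]_(i < N) \big[Num.min/1]_(j in Y i) Num.min (d i j) (dd i j).

(* Main.v *)
Require Import Defs.
From HB Require Import structures.
From mathcomp Require Import all_boot all_order all_algebra.
From mathcomp Require Import all_classical all_reals all_analysis.
From mathcomp Require Import ring lra.
Import Order.TTheory GRing.Theory Num.Theory.
Local Open Scope ring_scope.

Definition ev (R : realType) (P : R -> Prop) :=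
  exists e : R, 0 < e /\ forall x, 0 < x <= e -> P x.
Arguments ev {R} P.

Lemma ev_le {R : realType} {a : R} : 0 < a -> ev (fun x => x <= a).
Proof. by move=> a0; exists a; split => // x /andP[]. Qed.

Lemma evI {R : realType} {P Q : R -> Prop} : ev P -> ev Q -> ev (fun x => P x /\ Q x).
Proof.
move=> [e1 [e10 H1]] [e2 [e20 H2]]; exists (Num.min e1 e2); split.
  by rewrite lt_min e10 e20.
move=> x /andP[x0]; rewrite le_min => /andP[xe1 xe2].
by split; [apply: H1|apply: H2]; rewrite x0.
Qed.

Lemma evW {R : realType} {P Q : R -> Prop} :
  (forall x, 0 < x -> P x -> Q x) -> ev P -> ev Q.
Proof.
move=> PQ [e [e0 H]]; exists e; split => // x /andP[x0 xe].
by apply: PQ => //; apply: H; rewrite x0.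
Qed.

Lemma ev_seq {R : realType} (T : eqType) (P : T -> R -> Prop) (s : seq T) :
  (forall i, i \in s -> ev (P i)) -> ev (fun x => forall i, i \in s -> P i x).
Proof.
elim: s => [|a s IH] H.
  by exists 1; split => // x _ i.
have := evI (H a (mem_head _ _)) (IH (fun i iS => H i (mem_behead (s := a :: s) iS))).
apply: evW => x _ [Pa Ps] i; rewrite inE => /orP[/eqP->//|]; exact: Ps.
Qed.

Lemma ev_fin {R : realType} (T : finType) (P : T -> R -> Prop) :
  (forall i, ev (P i)) -> ev (fun x => forall i, P i x).
Proof.
move=> H; have := @ev_seq R T P (enum T) (fun i _ => H i).
by apply: evW => x _ Hx i; apply: Hx; rewrite mem_enum.
Qed.

Lemma ev_small {R : realType} {dl a : R} : 0 < dl -> 0 < a ->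
  ev (fun x => x `^ dl <= a).
Proof.
move=> d0 a0; exists (a `^ dl^-1); split; first exact: powR_gt0.
move=> x /andP[x0 xe].
apply: (le_trans (y := (a `^ dl^-1) `^ dl)).
  apply: ge0_ler_powR => //; [exact: ltW|rewrite nnegrE; exact: ltW|exact: powR_ge0].
by rewrite -powRrM mulVf ?gt_eqF // powRr1 // ltW.
Qed.

Lemma w_facts {R : realType} {dl x : R} : 0 < dl <= 1 -> 0 < x <= 1 ->
  [/\ 0 < x `^ dl, x `^ dl <= 1 & x <= x `^ dl].
Proof.
move=> /andP[d0 d1] /andP[x0 x1]; split.
- exact: powR_gt0.
- by rewrite -(powRr0 x); apply: ger_powR; [rewrite x0 x1| exact: ltW].
- by apply: ger1_powR => //; rewrite x0 x1.
Qed.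

Definition Kp (R : realType) (dl : R) (f : R -> R) (n : int) :=
  exists c G : R, 0 < c /\ 0 <= G /\
    ev (fun x => `|f x * x ^ (- n) - c| <= G * x `^ dl).
Arguments Kp {R} dl f n.

Definition K0 (R : realType) (dl : R) (f : R -> R) :=
  ev (fun x => f x = 0) \/ exists n, Kp dl f n.
Arguments K0 {R} dl f.

Lemma Kp_ev_eq {R : realType} {dl : R} {f g n} :
  ev (fun x => f x = g x) -> @Kp R dl f n -> Kp dl g n.
Proof.
move=> E [c [G [c0 [G0 H]]]]; exists c, G; do 2!split => //.
by apply: evW (evI E H) => x _ [<-].
Qed.

Lemma K0_ev_eq {R : realType} {dl : R} {f g} :
  ev (fun x => f x = g x) -> @K0 R dl f -> K0 dl g.
Proof.
move=> E [Z|[n K]]; [left|right].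
  by apply: evW (evI E Z) => x _ [<-].
by exists n; exact: Kp_ev_eq K.
Qed.

Lemma Kp_bound {R : realType} {dl : R} {f n} : 0 < dl <= 1 -> @Kp R dl f n ->
  exists B, 0 < B /\ ev (fun x => `|f x * x ^ (- n)| <= B).
Proof.
move=> hd [c [G [c0 [G0 H]]]]; exists (c + G); split; first by rewrite ltr_wpDr.
move: (evI H (ev_le (@ltr01 R))); apply: evW => x x0 [Hx x1].
have x01 : 0 < x <= 1 by rewrite x0 x1.
have [_ w1 _] := w_facts hd x01.
have := ler_normD (f x * x ^ (- n) - c) c; rewrite subrK.
move/le_trans; apply; rewrite (gtr0_norm c0) addrC lerD2l.
by apply: le_trans Hx _; rewrite ler_piMr.
Qed.

Lemma normz_id {R : realType} (x : R) (n : int) : x != 0 ->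
  x ^ (- n) * x ^ n = 1.
Proof. by move=> x0; rewrite -expfzDr // addNr expr0z. Qed.

Lemma Kp_lower {R : realType} {dl : R} {f n} : 0 < dl <= 1 -> Kp dl f n ->
  exists L, 0 < L /\ ev (fun x => L <= f x * x ^ (- n)).
Proof.
move=> hd [c [G [c0 [G0 H]]]]; exists (c / 2); split; first by rewrite divr_gt0.
have hd0 : 0 < dl by case/andP: hd.
have cG : 0 < c / (2 * (G + 1)) by rewrite divr_gt0 // mulr_gt0 // ltr_wpDl.
move: (evI H (ev_small hd0 cG)); apply: evW => x x0 [Hx Hw].
have GW : G * x `^ dl <= c / 2.
  apply: (le_trans (ler_wpM2l G0 Hw)).
  have G1 : 0 < G + 1 by rewrite ltr_wpDl.
  have -> : G * (c / (2 * (G + 1))) = c / 2 * (G / (G + 1)).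
    by field; rewrite gt_eqF.
  rewrite ler_piMr ?divr_gt0 // ?divr_ge0 ?ltW //.
  by rewrite ltr_pdivrMr // mul1r ltrDl.
have := le_trans Hx GW; rewrite ler_norml => /andP[h _].
by rewrite -(lerD2r (- c)) (le_trans _ h) // {2}(splitr c) opprD addrA addrN add0r.
Qed.

Lemma Kp_pos {R : realType} {dl : R} {f n} : 0 < dl <= 1 -> Kp dl f n ->
  ev (fun x => 0 < f x).
Proof.
move=> hd K; have [L [L0 H]] := Kp_lower hd K.
apply: evW H => x x0 Lx.
have : 0 < f x * x ^ (- n) by apply: lt_le_trans Lx.
by rewrite pmulr_lgt0 // exprz_gte0.
Qed.

Lemma Kp_const {R : realType} (dl c : R) : 0 < c -> Kp dl (fun _ => c) 0.
Proof.
move=> c0; exists c, 0; do 2!split => //.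
by exists 1; split => // x _; rewrite oppr0 expr0z mulr1 subrr normr0 mul0r.
Qed.

Lemma Kp_mul {R : realType} {dl : R} {f g n m} : 0 < dl <= 1 ->
  Kp dl f n -> Kp dl g m -> Kp dl (fun x => f x * g x) (n + m).
Proof.
move=> hd Kf Kg; have [B [B0 HB]] := Kp_bound hd Kg.
move: Kf Kg => [c [G [c0 [G0 H]]]] [d [D [d0 [D0 H']]]].
exists (c * d), (G * B + c * D); split; first by rewrite mulr_gt0.
split; first by rewrite addr_ge0 // mulr_ge0 // ltW.
move: (evI (evI H H') HB); apply: evW => x x0 [[Hf Hg] Hb].
have -> : f x * g x * x ^ (- (n + m)) = (f x * x ^ (- n)) * (g x * x ^ (- m)).
  by rewrite opprD expfzDr ?gt_eqF // mulrACA.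
set a := f x * x ^ (- n); set b := g x * x ^ (- m).
have -> : a * b - c * d = (a - c) * b + c * (b - d) by ring.
apply: (le_trans (ler_normD _ _)); rewrite (normrM (a - c) b) (normrM c) (gtr0_norm c0).
rewrite mulrDl lerD //.
  by rewrite [X in _ <= X]mulrAC; apply: ler_pM => //.
by rewrite -mulrA ler_pM2l.
Qed.

Lemma Kp_inv {R : realType} {dl : R} {f n} : 0 < dl <= 1 ->
  Kp dl f n -> Kp dl (fun x => (f x)^-1) (- n).
Proof.
move=> hd K; have [L [L0 HL]] := Kp_lower hd K.
move: K => [c [G [c0 [G0 H]]]].
exists c^-1, (G / (L * c)); split; first by rewrite invr_gt0.
split; first by rewrite divr_ge0 // mulr_ge0 // ltW.
move: (evI H HL); apply: evW => x x0 [Hx Lx].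
have -> : (f x)^-1 * x ^ (- - n) = (f x * x ^ (- n))^-1.
  by rewrite invfM invr_expz.
set a := f x * x ^ (- n).
have a0 : 0 < a by apply: lt_le_trans Lx.
have -> : a^-1 - c^-1 = (c - a) / (a * c).
  by field; rewrite ?gt_eqF.
rewrite normrM distrC normfV (gtr0_norm (mulr_gt0 a0 c0)).
rewrite [X in _ <= X]mulrAC.
apply: ler_pM => //; first by rewrite invr_ge0 ltW // mulr_gt0.
by rewrite lef_pV2 ?posrE ?(mulr_gt0 a0 c0) ?(mulr_gt0 L0 c0) // ler_pM2r.
Qed.

Lemma Kp_add_eq {R : realType} {dl : R} {f g n} :
  Kp dl f n -> Kp dl g n -> Kp dl (fun x => f x + g x) n.
Proof.
move=> [c [G [c0 [G0 H]]]] [d [D [d0 [D0 H']]]].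
exists (c + d), (G + D); split; first by rewrite addr_gt0.
split; first by rewrite addr_ge0.
move: (evI H H'); apply: evW => x x0 [Hf Hg].
have -> : (f x + g x) * x ^ (- n) - (c + d) =
  (f x * x ^ (- n) - c) + (g x * x ^ (- n) - d) by ring.
by rewrite mulrDl (le_trans (ler_normD _ _)) // lerD.
Qed.

Lemma Kp_add_lt {R : realType} {dl : R} {f g n m} : 0 < dl <= 1 -> (n < m)%R ->
  Kp dl f n -> Kp dl g m -> Kp dl (fun x => f x + g x) n.
Proof.
move=> hd nm Kf Kg; have [B [B0 HB]] := Kp_bound hd Kg.
move: Kf => [c [G [c0 [G0 H]]]].
exists c, (G + B); split => //; split; first by rewrite addr_ge0 // ltW.
move: (evI (evI H HB) (ev_le (@ltr01 R))); apply: evW => x x0 [[Hf Hb] x1].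
have x01 : 0 < x <= 1 by rewrite x0 x1.
have [w0 w1 xw] := w_facts hd x01.
have -> : (f x + g x) * x ^ (- n) - c =
   (f x * x ^ (- n) - c) + (g x * x ^ (- m)) * x ^ (m - n).
  by rewrite mulrDl -mulrA -expfzDr ?gt_eqF // addrA addNr add0r; ring.
rewrite mulrDl.
have := ler_normD (f x * x ^ (- n) - c) (g x * x ^ (- m) * x ^ (m - n)).
move/le_trans; apply; apply: lerD => //; rewrite normrM.
have xmn : `|x ^ (m - n)| <= x `^ dl.
  rewrite ger0_norm; last by rewrite exprz_ge0 // ltW.
  apply: (le_trans _ xw).
  have := @ler_wpiXz2l R x (ltW x0) x1 (m - n) 1.
  have h1 : 1 <= m - n by rewrite lerBrDr addrC lezD1.
  rewrite expr1z; apply => //; exact: (le_trans ler01 h1).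
by apply: ler_pM => //.
Qed.

Lemma Kp_add {R : realType} {dl : R} {f g n m} : 0 < dl <= 1 ->
  Kp dl f n -> Kp dl g m -> Kp dl (fun x => f x + g x) (Num.min n m).
Proof.
move=> hd Kf Kg; case: (ltgtP n m) => [nm|mn|nm].
- exact: (Kp_add_lt hd nm Kf Kg).
- apply: (Kp_ev_eq (f := fun x => g x + f x)); first by exists 1; split => // x _; rewrite addrC.
  exact: (Kp_add_lt hd mn Kg Kf).
- by move: Kg; rewrite -nm => Kg; exact: (Kp_add_eq Kf Kg).
Qed.

Lemma K0_zero {R : realType} (dl : R) : K0 dl (fun _ => 0).
Proof. by left; exists 1; split. Qed.

Lemma Kp_K0 {R : realType} {dl : R} {f n} : Kp dl f n -> K0 dl f.
Proof. by move=> K; right; exists n. Qed.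

Lemma Kp_addK0 {R : realType} {dl : R} {f g n} : 0 < dl <= 1 ->
  Kp dl f n -> K0 dl g -> exists m, m <= n /\ Kp dl (fun x => f x + g x) m.
Proof.
move=> hd Kf [Z|[m Kg]].
  exists n; split => //; apply: Kp_ev_eq Kf.
  by apply: evW Z => x _ ->; rewrite addr0.
by exists (Num.min n m); split; [rewrite ge_min lexx | exact: Kp_add].
Qed.

Lemma K0_add {R : realType} {dl : R} {f g} : 0 < dl <= 1 ->
  K0 dl f -> K0 dl g -> K0 dl (fun x => f x + g x).
Proof.
move=> hd [Zf|[n Kf]] Kg.
  case: Kg => [Zg|[m Kg]].
    by left; apply: evW (evI Zf Zg) => x _ [-> ->]; rewrite addr0.
  right; exists m; apply: Kp_ev_eq Kg.
  by apply: evW Zf => x _ ->; rewrite add0r.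
by have [m [_ K]] := Kp_addK0 hd Kf Kg; right; exists m.
Qed.

Lemma K0_mul {R : realType} {dl : R} {f g} : 0 < dl <= 1 ->
  K0 dl f -> K0 dl g -> K0 dl (fun x => f x * g x).
Proof.
move=> hd [Zf|[n Kf]].
  by move=> _; left; apply: evW Zf => x _ ->; rewrite mul0r.
move=> [Zg|[m Kg]].
  by left; apply: evW Zg => x _ ->; rewrite mulr0.
by right; exists (n + m); exact: Kp_mul.
Qed.

Lemma Kp_div {R : realType} {dl : R} {f g n m} : 0 < dl <= 1 ->
  Kp dl f n -> Kp dl g m -> Kp dl (fun x => f x / g x) (n - m).
Proof. by move=> hd Kf Kg; apply: (Kp_mul hd Kf (Kp_inv hd Kg)). Qed.

Lemma K0_div {R : realType} {dl : R} {f g m} : 0 < dl <= 1 ->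
  K0 dl f -> Kp dl g m -> K0 dl (fun x => f x / g x).
Proof. by move=> hd Kf Kg; apply: (K0_mul hd Kf (Kp_K0 (Kp_inv hd Kg))). Qed.

Lemma K0_ge0 {R : realType} {dl : R} {f} : 0 < dl <= 1 ->
  K0 dl f -> ev (fun x => 0 <= f x).
Proof.
move=> hd [Z|[n K]]; first by apply: evW Z => x _ ->.
by apply: evW (Kp_pos hd K) => x _ /ltW.
Qed.

Lemma K0_sum {R : realType} {dl : R} {T : Type} (s : seq T) (P : pred T)
  (F : T -> R -> R) : 0 < dl <= 1 ->
  (forall j, P j -> K0 dl (F j)) ->
  K0 dl (fun x => \sum_(j <- s | P j) F j x).
Proof.
move=> hd H; elim: s => [|a s IH].
  by apply: K0_ev_eq (K0_zero dl); exists 1; split => // x _; rewrite big_nil.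
case Pa: (P a).
  apply: K0_ev_eq (K0_add hd (H a Pa) IH).
  by exists 1; split => // x _; rewrite big_cons Pa.
by apply: K0_ev_eq IH; exists 1; split => // x _; rewrite big_cons Pa.
Qed.

Definition Kx {R : realType} (dl : R) (f : R -> R) := exists n, Kp dl f n.

Lemma KxK0 {R : realType} {dl : R} {f g} : 0 < dl <= 1 ->
  Kx dl f -> K0 dl g -> Kx dl (fun x => f x + g x).
Proof. by move=> hd [n K] K'; have [m [_ H]] := Kp_addK0 hd K K'; exists m. Qed.

Lemma K0Kx {R : realType} {dl : R} {f g} : 0 < dl <= 1 ->
  K0 dl f -> Kx dl g -> Kx dl (fun x => f x + g x).
Proof.
move=> hd K K'; have [m H] := KxK0 hd K' K; exists m.
by apply: Kp_ev_eq H; exists 1; split => // x _; rewrite addrC.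
Qed.

Lemma Kx_mul {R : realType} {dl : R} {f g} : 0 < dl <= 1 ->
  Kx dl f -> Kx dl g -> Kx dl (fun x => f x * g x).
Proof. by move=> hd [n K] [m K']; exists (n + m); exact: Kp_mul. Qed.

Lemma Kx_div {R : realType} {dl : R} {f g} : 0 < dl <= 1 ->
  Kx dl f -> Kx dl g -> Kx dl (fun x => f x / g x).
Proof. by move=> hd [n K] [m K']; exists (n - m); exact: Kp_div. Qed.

Lemma Kx_K0 {R : realType} {dl : R} {f} : Kx dl f -> K0 dl f.
Proof. by move=> [n K]; exact: Kp_K0 K. Qed.

Lemma Kx_ev_eq {R : realType} {dl : R} {f g} :
  ev (fun x => f x = g x) -> Kx dl f -> Kx dl g.
Proof. by move=> E [n K]; exists n; exact: Kp_ev_eq E K. Qed.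

Lemma sum_split {R : realType} {T : finType} {A : {set T}} {r : T} {F : T -> R} :
  r \in A -> \sum_(j in A) F j = F r + \sum_(j in A :\ r) F j.
Proof.
move=> rA; rewrite (bigD1 r) //=; congr (_ + _).
by apply: eq_bigl => j; rewrite in_setD1 andbC.
Qed.

Lemma Kx_sum1 {R : realType} {dl : R} {T : finType} (B : {set T}) (j0 : T)
  (F : T -> R -> R) : 0 < dl <= 1 -> j0 \in B -> Kx dl (F j0) ->
  (forall j, j \in B -> K0 dl (F j)) -> Kx dl (fun x => \sum_(j in B) F j x).
Proof.
move=> hd jB Kj H.
have K : K0 dl (fun x => \sum_(j in B :\ j0) F j x).
  apply: K0_sum => // j; rewrite in_setD1 => /andP[_]; exact: H.
apply: Kx_ev_eq (KxK0 hd Kj K).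
by exists 1; split => // x _; rewrite (sum_split (F := fun j => F j x) jB).
Qed.

Lemma sumQ' {R : realType} {T : finType} (B : {set T}) (a b g : T -> R) (c : R) :
  \sum_(j in B) (a j + c * b j) * g j =
  \sum_(j in B) a j * g j + c * \sum_(j in B) b j * g j.
Proof.
rewrite mulr_sumr -big_split /=; apply: eq_bigr => j _; ring.
Qed.

Lemma sumQ'0 {R : realType} {T : finType} (B : {set T}) (a b : T -> R) (c : R) :
  \sum_(j in B) (a j + c * b j) =
  \sum_(j in B) a j + c * \sum_(j in B) b j.
Proof. by rewrite mulr_sumr -big_split. Qed.

Definition closedc {R : realType} (dl : R) {S : finType} (A : {set S})
  (Q : R -> S -> S -> R) :=
  forall B : {set S}, B \subset A -> B != finset.set0 -> exists2 k, k \in B &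
      Kx dl (fun x => 1 - \sum_(j in A) Q x k j) \/
      exists j, [/\ j \in A, j \notin B & Kx dl (fun x => Q x k j)].

Lemma elim_main {R : realType} {dl : R} {S : finType} : 0 < dl <= 1 ->
  forall (n : nat) (A : {set S}) (Q : R -> S -> S -> R) (f : R -> S -> R),
  #|A| = n ->
  (forall k j, k \in A -> j \in A -> K0 dl (fun x => Q x k j)) ->
  (forall k, k \in A -> K0 dl (fun x => 1 - \sum_(j in A) Q x k j)) ->
  (forall k, k \in A -> Kx dl (fun x => f x k)) ->
  closedc dl A Q ->
  exists h : R -> S -> R, exists e1 : R, 0 < e1 /\
   (forall x, 0 < x <= e1 -> forall k, k \in A ->
        h x k = f x k + \sum_(j in A) Q x k j * h x j /\ 0 < h x k) /\
   (forall k, k \in A -> Kx dl (fun x => h x k)) /\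
   (forall x, 0 < x <= e1 -> forall g : S -> R,
        (forall k, k \in A -> g k = f x k + \sum_(j in A) Q x k j * g j) ->
        forall k, k \in A -> g k = h x k).
Proof.
move=> hd; elim => [|n IH] A Q f cardA HQ Hx Hf Hcl.
  have A0 : A = finset.set0 by apply/eqP; rewrite -cards_eq0 cardA.
  exists (fun _ _ => 0), 1; split => //; rewrite A0.
  split; [by move=> x _ k; rewrite inE|split; [by move=> k; rewrite inE|by move=> x _ g _ k; rewrite inE]].
have [r rA] : exists r, r \in A.
  by apply/set0Pn; rewrite -card_gt0 cardA.
set A' := A :\ r.
have cardA' : #|A'| = n by move: cardA; rewrite (cardsD1 r A) rA add1n => -[].
set D := fun x => 1 - Q x r r.
set Q' := fun x k j => Q x k j + Q x k r / D x * Q x r j.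
set f' := fun x k => f x k + Q x k r / D x * f x r.
have A'A : forall j, j \in A' -> j \in A by move=> j; rewrite in_setD1 => /andP[].
have A'r : forall j, j \in A' -> j != r by move=> j; rewrite in_setD1 => /andP[].
have DK : Kx dl D.
  have rB : [set r] \subset A by rewrite finset.sub1set.
  have r0 : [set r] != finset.set0 by apply/set0Pn; exists r; rewrite finset.in_set1.
  have [k] := Hcl [set r] rB r0; rewrite finset.in_set1 => /eqP -> [Kr|[j [jA jr Kj]]].
    apply: Kx_ev_eq (KxK0 hd Kr (K0_sum (index_enum S) (fun j => j \in A') (fun j x => Q x r j) hd
      (fun j jA' => HQ r j rA (A'A j jA')))).
    by exists 1; split => // x _; rewrite /D (sum_split (F := fun j => Q x r j) rA); ring.
  have jA' : j \in A' by rewrite in_setD1 jA andbT; rewrite finset.in_set1 in jr.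
  have Ks := Kx_sum1 A' j (fun j x => Q x r j) hd jA' Kj (fun j jA' => HQ r j rA (A'A j jA')).
  apply: Kx_ev_eq (K0Kx hd (Hx r rA) Ks).
  by exists 1; split => // x _; rewrite /D (sum_split (F := fun j => Q x r j) rA); ring.
have [dD DKp] := DK.
have Dpos := Kp_pos hd DKp.
have HQ' : forall k j, k \in A' -> j \in A' -> K0 dl (fun x => Q' x k j).
  move=> k j kA jA; apply: (K0_add hd (HQ k j (A'A k kA) (A'A j jA))).
  exact: (K0_mul hd (K0_div hd (HQ k r (A'A k kA) rA) DKp) (HQ r j rA (A'A j jA))).
have xeq : forall k, k \in A' -> ev (fun x =>
    (1 - \sum_(j in A) Q x k j) + Q x k r / D x * (1 - \sum_(j in A) Q x r j)
    = 1 - \sum_(j in A') Q' x k j).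
  move=> k kA; apply: evW Dpos => x _ D0.
  rewrite /Q' sumQ'0 (sum_split (F := fun j => Q x k j) rA).
  rewrite (sum_split (F := fun j => Q x r j) rA) -/A'.
  by move: D0; rewrite /D => D0; by field; rewrite gt_eqF.
have Hx' : forall k, k \in A' -> K0 dl (fun x => 1 - \sum_(j in A') Q' x k j).
  move=> k kA; apply: K0_ev_eq (xeq k kA) _.
  apply: (K0_add hd (Hx k (A'A k kA))).
  exact: (K0_mul hd (K0_div hd (HQ k r (A'A k kA) rA) DKp) (Hx r rA)).
have Hf' : forall k, k \in A' -> Kx dl (fun x => f' x k).
  move=> k kA; apply: (KxK0 hd (Hf k (A'A k kA))).
  exact: (K0_mul hd (K0_div hd (HQ k r (A'A k kA) rA) DKp) (Kx_K0 (Hf r rA))).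
have Kx'x : forall k, k \in A' -> Kx dl (fun x => 1 - \sum_(j in A) Q x k j) ->
    Kx dl (fun x => 1 - \sum_(j in A') Q' x k j).
  move=> k kA Kk; apply: Kx_ev_eq (xeq k kA) _.
  apply: (KxK0 hd Kk).
  exact: (K0_mul hd (K0_div hd (HQ k r (A'A k kA) rA) DKp) (Hx r rA)).
have Kx'x2 : forall k, k \in A' -> Kx dl (fun x => Q x k r) ->
    Kx dl (fun x => 1 - \sum_(j in A) Q x r j) ->
    Kx dl (fun x => 1 - \sum_(j in A') Q' x k j).
  move=> k kA Kkr Kr; apply: Kx_ev_eq (xeq k kA) _.
  apply: (K0Kx hd (Hx k (A'A k kA))).
  exact: (Kx_mul hd (Kx_div hd Kkr DK) Kr).
have KQ'1 : forall k j, k \in A' -> j \in A' -> Kx dl (fun x => Q x k j) ->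
    Kx dl (fun x => Q' x k j).
  move=> k j kA jA Kkj; apply: (KxK0 hd Kkj).
  exact: (K0_mul hd (K0_div hd (HQ k r (A'A k kA) rA) DKp) (HQ r j rA (A'A j jA))).
have KQ'2 : forall k j, k \in A' -> j \in A' -> Kx dl (fun x => Q x k r) ->
    Kx dl (fun x => Q x r j) -> Kx dl (fun x => Q' x k j).
  move=> k j kA jA Kkr Krj; apply: (K0Kx hd (HQ k j (A'A k kA) (A'A j jA))).
  exact: (Kx_mul hd (Kx_div hd Kkr DK) Krj).
have Hcl' : closedc dl A' Q'.
  move=> B BA' B0.
  have BA : B \subset A by apply: fintype.subset_trans BA' (subD1set A r).
  have [k kB [Kk|[j [jA jB Kj]]]] := Hcl B BA B0.
  - by exists k => //; left; apply: Kx'x => //; apply: (fintype.subsetP BA'). 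
  - have kA' : k \in A' by apply: (fintype.subsetP BA').
    case: (eqVneq j r) => [jr|jr].
      rewrite jr in Kj.
      have rB1 : r |: B \subset A by rewrite finset.subUset finset.sub1set rA BA.
      have rB0 : r |: B != finset.set0 by apply/set0Pn; exists r; rewrite setU11.
      have [k' /setU1P [->|k'B] [Kk'|[j' [j'A j'B Kj']]]] := Hcl (r |: B) rB1 rB0.
      + by exists k => //; left; apply: Kx'x2.
      + have j'A' : j' \in A'.
          by rewrite in_setD1 j'A andbT; apply: contra j'B => /eqP ->; rewrite setU11.
        exists k => //; right; exists j'; split => //.
          by apply: contra j'B => jB'; rewrite setU1r.
        exact: KQ'2.
      + by exists k' => //; left; apply: Kx'x => //; apply: (fintype.subsetP BA').
      + have j'A' : j' \in A'.
          by rewrite in_setD1 j'A andbT; apply: contra j'B => /eqP ->; rewrite setU11.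
        exists k' => //; right; exists j'; split => //.
          by apply: contra j'B => jB'; rewrite setU1r.
        by apply: KQ'1 => //; apply: (fintype.subsetP BA').
    have jA' : j \in A' by rewrite in_setD1 jA jr.
    by exists k => //; right; exists j; split => //; apply: KQ'1.
have [h' [e1' [e10' [Hs' [HK' Hu']]]]] := IH A' Q' f' cardA' HQ' Hx' Hf' Hcl'.
have Qnn : ev (fun x => forall k j, k \in A -> j \in A -> 0 <= Q x k j).
  apply: (ev_fin S (fun k x => forall j, k \in A -> j \in A -> 0 <= Q x k j)) => k.
  apply: (ev_fin S (fun j x => k \in A -> j \in A -> 0 <= Q x k j)) => j.
  case kA: (k \in A); last by exists 1; split.
  case jA: (j \in A); last by exists 1; split.
  by apply: evW (K0_ge0 hd (HQ k j kA jA)) => x _ H _ _.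
have fpos : ev (fun x => forall k, k \in A -> 0 < f x k).
  apply: (ev_fin S (fun k x => k \in A -> 0 < f x k)) => k.
  case kA: (k \in A); last by exists 1; split.
  have [m Km] := Hf k kA.
  by apply: evW (Kp_pos hd Km) => x _ H _.
have [e2 [e20 H2]] := evI (evI Qnn fpos) Dpos.
set h := fun x k => if k == r then (f x r + \sum_(j in A') Q x r j * h' x j) / D x
                    else h' x k.
exists h, (Num.min e1' e2); split; first by rewrite lt_min e10' e20.
have reg : forall x, 0 < x <= Num.min e1' e2 -> (0 < x <= e1') /\
    (((forall k j, k \in A -> j \in A -> 0 <= Q x k j) /\
     (forall k, k \in A -> 0 < f x k)) /\ 0 < D x).
  move=> x /andP[x0]; rewrite le_min => /andP[x1 x2]; split; first by rewrite x0.
  by apply: H2; rewrite x0.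
have hA' : forall x j, j \in A' -> h x j = h' x j.
  by move=> x j jA; rewrite /h (negbTE (A'r j jA)).
have Ehr : forall x, h x r = (f x r + \sum_(j in A') Q x r j * h' x j) / D x.
  by move=> x; rewrite /h eqxx.
have sumh : forall x (F : S -> R), \sum_(j in A) F j * h x j =
    F r * h x r + \sum_(j in A') F j * h' x j.
  move=> x F; rewrite (sum_split (F := fun j => F j * h x j) rA); congr (_ + _).
  by apply: eq_bigr => j jA; rewrite hA'.
split.
  move=> x xr k kA; have [x1 [[Qn fp] Dp]] := reg x xr.
  rewrite sumh; case: (eqVneq k r) => [->|kr].
    split.
      rewrite Ehr; move: Dp; rewrite /D => Dp; by field; rewrite gt_eqF.
    rewrite Ehr divr_gt0 //; apply: (lt_le_trans (fp r rA)); rewrite lerDl.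
    apply: sumr_ge0 => j jA; apply: mulr_ge0; first exact: Qn rA (A'A j jA).
    by apply: ltW; have [_ ] := Hs' x x1 j jA.
  have kA' : k \in A' by rewrite in_setD1 kr kA.
  have [E P] := Hs' x x1 k kA'.
  rewrite hA' //; split => //.
  rewrite E /f' /Q' (sumQ' A' (fun j => Q x k j) (fun j => Q x r j) (h' x) (Q x k r / D x)).
  rewrite Ehr; move: Dp; rewrite /D => Dp; by field; rewrite gt_eqF.
split.
  move=> k kA; case: (eqVneq k r) => [->|kr].
    have K : Kx dl (fun x => (f x r + \sum_(j in A') Q x r j * h' x j) / D x).
      apply: (Kx_div hd _ DK); apply: (KxK0 hd (Hf r rA)).
      apply: (K0_sum (index_enum S) (fun j => j \in A') (fun j x => Q x r j * h' x j) hd).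
      move=> j jA; exact: (K0_mul hd (HQ r j rA (A'A j jA)) (Kx_K0 (HK' j jA))).
    by apply: Kx_ev_eq K; exists 1; split => // x _; rewrite Ehr.
  have kA' : k \in A' by rewrite in_setD1 kr kA.
  by apply: Kx_ev_eq (HK' k kA'); exists 1; split => // x _; rewrite hA'.
move=> x xr g Hg k kA; have [x1 [[Qn fp] Dp]] := reg x xr.
have Dx : D x != 0 by rewrite gt_eqF.
have gr : g r = (f x r + \sum_(j in A') Q x r j * g j) / D x.
  have E := Hg r rA; rewrite (sum_split (F := fun j => Q x r j * g j) rA) in E.
  have E' : g r * D x = f x r + \sum_(j in A') Q x r j * g j.
    rewrite /D mulrBr mulr1 {1}E; ring.
  by rewrite -E' mulfK.
have Hg' : forall k, k \in A' -> g k = f' x k + \sum_(j in A') Q' x k j * g j.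
  move=> k' kA'; rewrite {1}(Hg k' (A'A k' kA')).
  rewrite (sum_split (F := fun j => Q x k' j * g j) rA) /f' /Q'.
  rewrite (sumQ' A' (fun j => Q x k' j) (fun j => Q x r j) g (Q x k' r / D x)) gr.
  by field.
have Hu := Hu' x x1 g Hg'.
case: (eqVneq k r) => [->|kr].
  rewrite gr Ehr; congr (_ / _); congr (_ + _); apply: eq_bigr => j jA.
  by rewrite Hu.
have kA' : k \in A' by rewrite in_setD1 kr kA.
by rewrite hA' //; exact: Hu.
Qed.

Lemma Kp_expand {R : realType} {dl : R} (f : R -> R) (n0 : int) (K : nat)
  (a : nat -> R) (G dd e1 : R) :
  0 < dl <= 1 -> dl <= dd -> 0 < a 0%N -> 0 < e1 -> 0 <= G ->
  (forall x, 0 < x <= e1 ->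
     `|f x - \sum_(k < K.+1) a k * x ^ (n0 + k%:Z)| <= G * (x ^ (n0 + K%:Z) * x `^ dd)) ->
  Kp dl f n0.
Proof.
move=> hd ddd a0 e10 G0 H.
exists (a 0%N), (G + \sum_(k < K) `|a k.+1|); split => //.
split; first by rewrite addr_ge0 // sumr_ge0.
exists (Num.min e1 1); split; first by rewrite lt_min e10 ltr01.
move=> x /andP[x0]; rewrite le_min => /andP[xe1 x1].
have x01 : 0 < x <= 1 by rewrite x0 x1.
have [w0 w1 xw] := w_facts hd x01.
have xn0 : x != 0 by rewrite gt_eqF.
have HS : (\sum_(k < K.+1) a k * x ^ (n0 + k%:Z)) * x ^ (- n0) =
    a 0%N + \sum_(k < K) a k.+1 * x ^+ k.+1.
  rewrite mulr_suml.
  have -> : \sum_(k < K.+1) a k * x ^ (n0 + k%:Z) * x ^ (- n0) =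
            \sum_(k < K.+1) a k * x ^+ k.
    apply: eq_bigr => k _.
    by rewrite -mulrA -expfzDr // (addrC n0) -addrA subrr addr0.
  by rewrite big_ord_recl expr0 mulr1.
set S := \sum_(k < K.+1) a k * x ^ (n0 + k%:Z).
have -> : f x * x ^ (- n0) - a 0%N =
    (f x - S) * x ^ (- n0) + \sum_(k < K) a k.+1 * x ^+ k.+1.
  by rewrite mulrBl HS; ring.
have xp : 0 < x ^ (- n0) by rewrite exprz_gt0.
rewrite [X in _ <= X]mulrDl.
have := ler_normD ((f x - S) * x ^ (- n0)) (\sum_(k < K) a k.+1 * x ^+ k.+1).
move/le_trans; apply; apply: lerD.
  rewrite normrM (gtr0_norm xp).
  have xe : 0 < x <= e1 by rewrite x0 xe1.
  apply: (le_trans (ler_wpM2r (ltW xp) (H x xe))).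
  have -> : G * (x ^ (n0 + K%:Z) * x `^ dd) * x ^ (- n0) = G * (x ^+ K * x `^ dd).
    rewrite expfzDr //; change (x ^ (K%:Z)) with (x ^+ K).
    transitivity (G * (x ^+ K * x `^ dd) * (x ^ (- n0) * x ^ n0)); first ring.
    by rewrite normz_id // mulr1.
  apply: ler_wpM2l => //.
  apply: (le_trans (y := 1 * x `^ dd)).
    by apply: ler_wpM2r; [exact: powR_ge0 | exact: exprn_ile1 (ltW x0) x1].
  rewrite mul1r; apply: ger_powR => //.
apply: (le_trans (ler_norm_sum _ _ _)); rewrite mulr_suml; apply: ler_sum => k _.
rewrite normrM ler_wpM2l // ger0_norm; last by rewrite exprn_ge0 // ltW.
by apply: (le_trans _ xw); apply: ler_iXnr => //; exact: ltW.
Qed.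

Module RetTime.
Import numFieldNormedType.Exports.

Lemma sumT {R : realType} {N : nat} (i : 'I_N) (F : 'I_N -> R) :
  \sum_(k < N) F k = F i + \sum_(k in [set: 'I_N] :\ i) F k.
Proof.
rewrite (bigD1 i) //=; congr (_ + _).
by apply: eq_bigl => k; rewrite in_setD1 finset.in_setT andbT.
Qed.

Lemma ret_time_eq {R : realType} {N : nat} (P Em : 'I_N -> 'I_N -> R) (i : 'I_N)
  (h : 'I_N -> R) :
  (forall k j, 0 <= P k j) ->
  (forall k, 0 < esoj Em k) ->
  (forall k, k \in [set: 'I_N] :\ i ->
     h k = esoj Em k + \sum_(j in [set: 'I_N] :\ i) P k j * h j) ->
  (forall k, k \in [set: 'I_N] :\ i -> 0 <= h k) ->
  ret_time P Em i = esoj Em i + \sum_(k in [set: 'I_N] :\ i) P i k * h k.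
Proof.
move=> P0 e0 hE h0.
set A := [set: 'I_N] :\ i.
set e := esoj Em.
set T := e i + \sum_(k in A) P i k * h k.
set u := taboo P i.
set t := fun n => \sum_(k < N) u n k * e k.
have u0 : forall n k, 0 <= u n k.
  elim => [|n IH] k /=; first exact: ler0n.
  by apply: mulr_ge0; [exact: ler0n | apply: sumr_ge0 => m _; exact: mulr_ge0].
have ui : forall n, u n.+1 i = 0 by move=> n; rewrite /u /= eqxx mul0r.
have kA : forall k, k \in A -> k != i by move=> k; rewrite in_setD1 => /andP[].
set Rn := fun n => \sum_(k in A) u n k * h k.
have tA : forall n, t n.+1 = \sum_(k in A) u n.+1 k * e k.
  by move=> n; rewrite /t (sumT i) ui mul0r add0r.
have inv : forall n, series t n.+1 + Rn n.+1 = T.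
  elim => [|n IH].
    rewrite seriesSr /series /= big_geq // add0r /t (sumT i) /Rn /T.
    rewrite /u /= eqxx mul1r; congr (_ + _).
      by rewrite big1 ?addr0 // => k kA'; rewrite (negbTE (kA k kA')) mul0r.
    apply: eq_bigr => k kA'; rewrite (kA k kA') mul1r.
    rewrite (sumT i) eqxx mul1r big1 ?addr0 // => m mA.
    by rewrite (negbTE (kA m mA)) mul0r.
  rewrite seriesSr -addrA -IH; congr (_ + _).
  rewrite tA /Rn.
  have -> : \sum_(k in A) u n.+2 k * h k =
      \sum_(m < N) u n.+1 m * \sum_(k in A) P m k * h k.
    transitivity (\sum_(k in A) \sum_(m < N) u n.+1 m * (P m k * h k)).
      apply: eq_bigr => k kA'; rewrite /u /= (kA k kA') mul1r mulr_suml.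
      by apply: eq_bigr => m _; rewrite mulrA.
    by rewrite exchange_big /=; apply: eq_bigr => m _; rewrite mulr_sumr.
  rewrite (sumT i) ui mul0r add0r -big_split /=.
  apply: eq_bigr => k kA'; rewrite -mulrDr; congr (_ * _).
  by rewrite (hE k kA').
have R0 : forall n, 0 <= Rn n.
  by move=> n; apply: sumr_ge0 => k kA'; rewrite mulr_ge0 // h0.
have t0 : forall n, 0 <= t n.
  by move=> n; apply: sumr_ge0 => k _; rewrite mulr_ge0 // ltW.
have T0 : 0 <= T by rewrite -(inv 0%N) addr_ge0 // /series /= big_nat1 t0.
have Sle : forall n, series t n <= T.
  case => [|n]; first by rewrite /series /= big_geq.
  by rewrite -(inv n) lerDl.
have cvgS0 : cvgn (series t).
  apply: (@nondecreasing_is_cvgn R (series t)).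
    rewrite seriesEnat; apply: nondecreasing_series => n _ _; exact: t0.
  by exists T => _ [n _ <-]; exact: Sle.
set C := \sum_(k in A) h k / e k.
have RC : forall n, Rn n.+1 <= C * t n.+1.
  move=> n; rewrite tA /Rn mulr_sumr; apply: ler_sum => k kA'.
  have ek := e0 k.
  have -> : u n.+1 k * h k = u n.+1 k * e k * (h k / e k) by field; rewrite gt_eqF.
  rewrite mulrC; apply: ler_wpM2r; first by rewrite mulr_ge0 // ltW.
  rewrite /C (bigD1 k) //= lerDl; apply: sumr_ge0 => j /andP[jA _].
  by rewrite divr_ge0 ?h0 ?ltW.
have HR : ((fun n => Rn n.+1) @ \oo --> 0)%classic.
  apply: (@squeeze_cvgr _ _ _ _ (fun _ => 0) (fun n => C * t n.+1)).
  - by apply: nearW => n; rewrite R0 RC.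
  - exact: cvg_cst.
  - have := cvg_series_cvg_0 cvgS0; rewrite -cvg_shiftS => H.
    by rewrite -(mulr0 C); apply: cvgMr.
have cvgS : (series t @ \oo --> T)%classic.
  rewrite -cvg_shiftS.
  have -> : (fun n => series t n.+1) = (fun n => T - Rn n.+1).
    by apply: funext => n; rewrite -(inv n) addrK.
  have H := cvgB (cvg_cst T) HR; rewrite subr0 in H; exact: H.
rewrite /ret_time; exact: cvg_lim.
Qed.

End RetTime.
Import RetTime.

Lemma bigmin_le {R : realType} {I : eqType} (s : seq I) (P : pred I) (F : I -> R) i0 :
  i0 \in s -> P i0 -> \big[Num.min/1]_(i <- s | P i) F i <= F i0.
Proof.
elim: s => // a s IH; rewrite inE => /orP[/eqP <-|iS] Pi; rewrite big_cons.
  by rewrite Pi ge_min lexx.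
by case: (P a); [rewrite ge_min IH ?orbT | exact: IH].
Qed.

Lemma delta_props {R : realType} {N : nat} (Y : 'I_N -> {set 'I_N})
  (d dd : 'I_N -> 'I_N -> R) :
  (forall k j, j \in Y k -> (0 < d k j <= 1) /\ 0 < dd k j) ->
  0 < delta_star Y d dd <= 1 /\
  (forall k j, j \in Y k -> delta_star Y d dd <= d k j /\ delta_star Y d dd <= dd k j).
Proof.
move=> H; split.
  apply/andP; split.
    apply: (big_ind (fun v : R => 0 < v)) => //; first by move=> x y x0 y0; rewrite lt_min x0 y0.
    move=> k _; apply: (big_ind (fun v : R => 0 < v)) => //; first by move=> x y x0 y0; rewrite lt_min x0 y0.
    by move=> j jY; have [/andP[d0 _] dd0] := H k j jY; rewrite lt_min d0 dd0.
  apply: (big_ind (fun v : R => v <= 1)) => //; first by move=> x y x0 y0; rewrite ge_min x0.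
  move=> k _; apply: (big_ind (fun v : R => v <= 1)) => //; first by move=> x y x0 y0; rewrite ge_min x0.
  by move=> j jY; have [/andP[_ d1] _] := H k j jY; rewrite ge_min d1.
move=> k j jY.
have h1 : delta_star Y d dd <= Num.min (d k j) (dd k j).
  apply: (le_trans (bigmin_le _ _ _ k (mem_index_enum k) isT)).
  exact: (bigmin_le _ _ _ j (mem_index_enum j) jY).
by split; apply: (le_trans h1); rewrite ge_min lexx ?orbT.
Qed.

Lemma Kx_natexp {R : realType} {dl : R} (f : R -> R) (lm lp : nat) (a : nat -> R)
  (G d ep : R) : 0 < dl <= 1 -> dl <= d -> (lm <= lp)%N -> 0 < a lm -> 0 < G -> 0 < ep ->
  (forall x, 0 < x <= ep ->
     `|f x - \sum_(lm <= l < lp.+1) a l * x ^+ l| <= G * x `^ (lp%:R + d)) ->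
  Kx dl f.
Proof.
move=> hd dld le1 a0 G0 ep0 H; exists (lm%:Z).
apply: (Kp_expand f lm (lp - lm) (fun l => a (lm + l)%N) G d ep hd dld) => //.
- by rewrite addn0.
- exact: ltW.
move=> x xe; have x0 : 0 < x by case/andP: xe.
have -> : \sum_(k < (lp - lm).+1) a (lm + k)%N * x ^ (lm%:Z + k%:Z) =
          \sum_(lm <= l < lp.+1) a l * x ^+ l.
  have E := big_addn 0 lp.+1 lm xpredT (fun l => a l * x ^+ l).
  rewrite add0n in E; rewrite E subSn // big_mkord.
  by apply: eq_bigr => k _; rewrite (addnC k) -PoszD.
have -> : x ^ (lm%:Z + (lp - lm)%N%:Z) * x `^ d = x `^ (lp%:R + d).
  rewrite powRD; last by rewrite (gt_eqF x0) implybT.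
  by rewrite powR_mulrn ?ltW // -PoszD subnKC.
exact: H.
Qed.

Lemma Kx_intexp {R : realType} {dl : R} (f : R -> R) (mm mp : int) (b : int -> R)
  (G d ep : R) : 0 < dl <= 1 -> dl <= d -> mm <= mp -> 0 < b mm -> 0 < G -> 0 < ep ->
  (forall x, 0 < x <= ep ->
     `|f x - \sum_(0 <= k < `|mp - mm|%N.+1) b (mm + k%:Z) * x ^ (mm + k%:Z)|
       <= G * x `^ (mp%:~R + d)) ->
  Kx dl f.
Proof.
move=> hd dld le1 b0 G0 ep0 H; exists mm.
apply: (Kp_expand f mm `|mp - mm|%N (fun l => b (mm + l%:Z)) G d ep hd dld) => //.
- by rewrite addr0.
- exact: ltW.
move=> x xe; have x0 : 0 < x by case/andP: xe.
have -> : x ^ (mm + `|mp - mm|%N%:Z) * x `^ d = x `^ (mp%:~R + d).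
  rewrite powRD; last by rewrite (gt_eqF x0) implybT.
  rewrite powR_intmul ?ltW // gez0_abs ?subr_ge0 //.
  by rewrite (addrC mm) subrK.
by rewrite -(big_mkord xpredT (fun k => b (mm + k%:Z) * x ^ (mm + k%:Z))); exact: H.
Qed.

Theorem theorem4 (R : realType) (N : nat) (eps0 : R)
  (p e : R -> 'I_N -> 'I_N -> R)
  (Y : 'I_N -> {set 'I_N})
  (lm lp : 'I_N -> 'I_N -> nat) (a : 'I_N -> 'I_N -> nat -> R)
  (d G epsp : 'I_N -> 'I_N -> R)
  (mm mp : 'I_N -> 'I_N -> int) (b : 'I_N -> 'I_N -> int -> R)
  (dd dG epse : 'I_N -> 'I_N -> R) :
  0 < eps0 -> eps0 <= 1 ->
  (* standing conditions: p, e come from semi-Markov kernels Q^(eps) *)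
  (forall eps, 0 < eps <= eps0 -> forall i j,
      0 <= p eps i j /\ 0 <= e eps i j /\ (p eps i j = 0 -> e eps i j = 0)) ->
  (forall eps, 0 < eps <= eps0 -> forall i, \sum_(j < N) p eps i j = 1) ->
  (* condition A *)
  (forall i, Y i != finset.set0) ->
  (forall eps, 0 < eps <= eps0 -> forall i j, j \in Y i -> 0 < p eps i j) ->
  (forall eps, 0 < eps <= eps0 -> forall i j, j \notin Y i -> p eps i j = 0) ->
  (forall i j, exists (n : nat) (l : nat -> 'I_N),
      [/\ (0 < n)%N, l 0%N = i, l n = j &
          forall m, (0 < m <= n)%N -> l m \in Y (l m.-1)]) ->
  (* condition D' *)
  (forall i j, j \in Y i ->
     [/\ (lm i j <= lp i j)%N, 0 < a i j (lm i j),
         [/\ 0 < d i j <= 1 & 0 < G i j], 0 < epsp i j <= eps0 &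
         forall eps, 0 < eps <= epsp i j ->
           `| p eps i j - \sum_(lm i j <= l < (lp i j).+1) a i j l * eps ^+ l |
             <= G i j * powR eps ((lp i j)%:R + d i j)]) ->
  (* condition E' *)
  (forall i j, j \in Y i ->
     [/\ mm i j <= mp i j, 0 < b i j (mm i j),
         [/\ 0 < dd i j <= 1 & 0 < dG i j], 0 < epse i j <= eps0 &
         forall eps, 0 < eps <= epse i j ->
           `| e eps i j - \sum_(0 <= k < `|mp i j - mm i j|%N.+1)
                            b i j (mm i j + k%:Z) * eps ^ (mm i j + k%:Z) |
             <= dG i j * powR eps ((mp i j)%:~R + dd i j)]) ->
  forall i : 'I_N,
  exists (nm np : nat) (c : nat -> R) (Gs epsi : R),
    [/\ (nm <= np)%N, c nm != 0, 0 < Gs, 0 < epsi <= eps0 &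
        forall eps, 0 < eps <= epsi ->
          `| stat_prob (p eps) (e eps) i - \sum_(nm <= l < np.+1) c l * eps ^+ l |
            <= Gs * powR eps (np%:R + delta_star Y d dd)].
Proof.
move=> e00 e01 Hst Hrow HYne HYpos HY0 Hirr HD HE i.
have [hd Hdl] : 0 < delta_star Y d dd <= 1 /\
  (forall k j, j \in Y k -> delta_star Y d dd <= d k j /\ delta_star Y d dd <= dd k j).
  apply: delta_props => k j jY.
  have [_ _ [d01 _] _ _] := HD k j jY; have [_ _ [/andP[dd0 _] _] _ _] := HE k j jY.
  by split.
set dl := delta_star Y d dd in hd Hdl *.
have Kpp : forall k j, j \in Y k -> Kx dl (fun x => p x k j).
  move=> k j jY; have [le1 a0 [/andP[d0 d1] G0] /andP[ep0 ep1] Hb] := HD k j jY.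
  exact: (Kx_natexp _ _ _ _ _ _ _ hd (proj1 (Hdl k j jY)) le1 a0 G0 ep0 Hb).
have Kpe : forall k j, j \in Y k -> Kx dl (fun x => e x k j).
  move=> k j jY; have [le1 b0 [/andP[d0 d1] G0] /andP[ep0 ep1] Hb] := HE k j jY.
  exact: (Kx_intexp _ _ _ _ _ _ _ hd (proj2 (Hdl k j jY)) le1 b0 G0 ep0 Hb).
have K0p : forall k j, K0 dl (fun x => p x k j).
  move=> k j; case jY: (j \in Y k); first exact: Kx_K0 (Kpp k j jY).
  by left; exists eps0; split => // x xe; apply: HY0 => //; rewrite jY.
have Ke : forall k, Kx dl (fun x => esoj (e x) k).
  move=> k; have /set0Pn [j0 j0Y] := HYne k.
  have K0e : forall j, j \in [set: 'I_N] -> K0 dl (fun x => e x k j).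
    move=> j _; case jY: (j \in Y k); first exact: Kx_K0 (Kpe k j jY).
    left; exists eps0; split => // x xe.
    by have [_ [_ H]] := Hst x xe k j; apply: H; apply: HY0 => //; rewrite jY.
  have := Kx_sum1 [set: 'I_N] j0 (fun j x => e x k j) hd (finset.in_setT j0) (Kpe k j0 j0Y) K0e.
  apply: Kx_ev_eq; exists 1; split => // x _; rewrite /esoj.
  by apply: eq_bigl => j; rewrite finset.in_setT.
set A := [set: 'I_N] :\ i.
have iA : i \notin A by rewrite in_setD1 eqxx.
have Hxe : forall k, ev (fun x => p x k i = 1 - \sum_(j in A) p x k j).
  move=> k; exists eps0; split => // x xe.
  by have := Hrow x xe k; rewrite (sumT i) => <-; rewrite addrK.
have Hcl : closedc dl A p.
  move=> B BA B0; have /set0Pn [b0 bB] := B0.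
  have iB : i \notin B by apply/negP => iB; move: iA; rewrite (fintype.subsetP BA i iB).
  have [n [l [n0 l0 ln Hl]]] := Hirr b0 i.
  have exP : exists m, l m \notin B by exists n; rewrite ln.
  case: (ex_minnP exP) => m Pm Hmin.
  have m0 : (0 < m)%N by move: Pm; case: m {Hmin} => [|m] //; rewrite l0 bB.
  have mn : (m <= n)%N by apply: Hmin; rewrite ln.
  have Bm1 : l m.-1 \in B.
    apply/negPn/negP => H; have := Hmin m.-1 H.
    by case: m m0 {Pm Hmin mn H} => //= m _; rewrite ltnn.
  have jY : l m \in Y (l m.-1) by apply: Hl; rewrite m0 mn.
  exists (l m.-1) => //.
  case: (eqVneq (l m) i) => [lmi|lmi].
    left; rewrite lmi in jY; exact: Kx_ev_eq (Hxe _) (Kpp _ _ jY).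
  right; exists (l m); split => //; first by rewrite in_setD1 lmi finset.in_setT.
  exact: Kpp.
have HQ : forall k j, k \in A -> j \in A -> K0 dl (fun x => p x k j) by move=> *; exact: K0p.
have Hx : forall k, k \in A -> K0 dl (fun x => 1 - \sum_(j in A) p x k j).
  by move=> k _; exact: K0_ev_eq (Hxe k) (K0p k i).
have Hf : forall k, k \in A -> Kx dl (fun x => esoj (e x) k) by move=> k _; exact: Ke.
have [h [e1 [e10 [Hs [HK Hu]]]]] :=
  elim_main hd #|A| A p (fun x k => esoj (e x) k) erefl HQ Hx Hf Hcl.
have [ni Kpi] := Ke i.
have epos : ev (fun x => forall k, 0 < esoj (e x) k).
  apply: (ev_fin 'I_N (fun k x => 0 < esoj (e x) k)) => k.
  by have [nk Kk] := Ke k; exact: Kp_pos hd Kk.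
set s := fun x => \sum_(k in A) p x i k * h x k.
have K0s : K0 dl s.
  apply: (K0_sum (index_enum _) (fun k => k \in A) (fun k x => p x i k * h x k) hd).
  by move=> k kA; exact: (K0_mul hd (K0p i k) (Kx_K0 (HK k kA))).
have K0g : K0 dl (fun x => s x / esoj (e x) i) := K0_div hd K0s Kpi.
have [m [m0 Kg]] := Kp_addK0 hd (Kp_const dl 1 ltr01) K0g.
have Kpi' := Kp_inv hd Kg.
have Kst : Kp dl (fun x => stat_prob (p x) (e x) i) (- m).
  apply: Kp_ev_eq Kpi'.
  have [e2 [e20 H2]] := epos.
  exists (Num.min (Num.min e1 eps0) e2); split; first by rewrite !lt_min e10 e00 e20.
  move=> x /andP[x0]; rewrite !le_min => /andP[/andP[xe1 xe0] xe2].
  have x1 : 0 < x <= e1 by rewrite x0 xe1.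
  have xeps : 0 < x <= eps0 by rewrite x0 xe0.
  have pos := H2 x (_ : 0 < x <= e2); rewrite x0 xe2 in pos; have {}pos := pos isT.
  have Hs' := Hs x x1.
  have rt := ret_time_eq (p x) (e x) i (h x) (fun k j => proj1 (Hst x xeps k j)) pos
    (fun k kA => proj1 (Hs' k kA)) (fun k kA => ltW (proj2 (Hs' k kA))).
  rewrite /stat_prob rt -/(s x).
  have s0 : 0 <= s x.
    apply: sumr_ge0 => k kA; apply: mulr_ge0; first exact: proj1 (Hst x xeps i k).
    exact: ltW (proj2 (Hs' k kA)).
  have Ei := pos i.
  have -> : 1 + s x / esoj (e x) i = (esoj (e x) i + s x) / esoj (e x) i.
    by field; rewrite gt_eqF.
  by rewrite invf_div.
have n0 : 0 <= - m by rewrite oppr_ge0.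
move: Kst; rewrite -(gez0_abs n0); set nn := `|- m|%N.
move=> [c [Gc [c0 [Gc0 [eK [eK0 HK']]]]]].
exists nn, nn, (fun _ => c), (Gc + 1), (Num.min eK eps0).
split => //.
- by rewrite gt_eqF.
- by rewrite ltr_wpDl.
- by rewrite lt_min eK0 e00 ge_min lexx orbT.
move=> x /andP[x0]; rewrite le_min => /andP[xeK xe0].
have xK : 0 < x <= eK by rewrite x0 xeK.
have x01 : 0 < x <= 1 by rewrite x0 (le_trans xe0 e01).
have [w0 w1 xw] := w_facts hd x01.
have H := HK' x xK.
rewrite big_nat1.
have xn0 : x != 0 by rewrite gt_eqF.
have -> : stat_prob (p x) (e x) i - c * x ^+ nn =
    (stat_prob (p x) (e x) i * x ^ (- nn%:Z) - c) * x ^+ nn.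
  rewrite mulrBl -mulrA.
  have -> : x ^ (- nn%:Z) * x ^+ nn = 1 by exact: (normz_id x nn%:Z xn0).
  by rewrite mulr1.
rewrite normrM (ger0_norm (exprn_ge0 _ (ltW x0))).
rewrite powRD; last by rewrite xn0 implybT.
rewrite powR_mulrn; last exact: ltW x0.
apply: (le_trans (ler_wpM2r (exprn_ge0 _ (ltW x0)) H)).
have -> : Gc * x `^ dl * x ^+ nn = (x ^+ nn * x `^ dl) * Gc by ring.
rewrite (mulrC (Gc + 1)); apply: ler_wpM2l; last by rewrite lerDl.
by rewrite mulr_ge0 // ?exprn_ge0 // ltW.
Qed.
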